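(* In the setting described in the context, suppose $p_i,p_j,p_k,p_l\in S_1$ satisfy $d(p_i,p_k)\ne d(p_j,p_l)$. If $C_2$ is a line, then $|C_{ij}\cap C_{kl}|\le4$.
   Context: A plane algebraic curve is an infinite set $Z_{\mathbb{R}}(f)=\{(a,b)\in\mathbb{R}^2:f(a,b)=0\}$ for a nonzero $f\in\mathbb{R}[x,y]$; its degree is the minimal degree of such $f$; it is irreducible if $f$ can be chosen irreducible over $\mathbb{R}$. Setting: $d\ge1$; $C_1=Z_{\mathbb{R}}(f_1)$ and $C_2=Z_{\mathbb{R}}(f_2)$ are irreducible plane algebraic curves of degree at most $d$ (possibly equal), with $f_1,f_2$ of minimum degree. $S_1=\{p_1,\dots,p_m\}\subset C_1$ and $S_2=\{q_1,\dots,q_n\}\subset C_2$ are sets of distinct points, $p_i=(a_i,b_i)$, satisfying: (1) neither $C_1$ nor $C_2$ is a vertical line; (2) $S_1\cap S_2=\emptyset$; (3) if $C_1$ (resp. $C_2$) is a circle, its center is not in $S_2$ (resp. $S_1$); (4) if $C_1$ (resp. $C_2$) is a circle, every concentric circle contains at most one point of $S_2$ (resp. $S_1$); (5) if $C_1$ (resp. $C_2$) is a line, then for every line $\ell$ parallel to it, the union of $\ell$ and its reflection in $C_1$ (resp. $C_2$) contains at most one point of $S_2$ (resp. $S_1$); (6) if $C_1$ (resp. $C_2$) is a line, every orthogonal line contains at most one point of $S_2$ (resp. $S_1$). For $1\le i,j\le m$, $C_{ij}\subset\mathbb{R}^4$ is the set of $(x,y,x',y')$ with $f_2(x,y)=0$,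 $f_2(x',y')=0$ and $(x-a_i)^2+(y-b_i)^2=(x'-a_j)^2+(y'-b_j)^2$. $d(\cdot,\cdot)$ is Euclidean distance. *)

(* Defs.v *)
From mathcomp Require Import all_boot all_algebra.
From mathcomp Require Import reals.
From mathcomp Require Import mpoly.

Set Implicit Arguments.
Unset Strict Implicit.
Unset Printing Implicit Defensive.

Import GRing.Theory Num.Theory.
Local Open Scope ring_scope.

Section Defs.
Variable R : realType.

Definition pt := (R * R)%type.

Definition peval (f : {mpoly R[2]}) (p : pt) : R :=
  f.@[fun i : 'I_2 => if val i == 0%N then p.1 else p.2].

Definition Zset (f : {mpoly R[2]}) : pt -> Prop := fun p => peval f p = 0.

Definition set_eq (A B : pt -> Prop) : Prop := forall p, A p <-> B p.

Definition infinite_set (A : pt -> Prop) : Prop :=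
  forall s : seq pt, exists p, A p /\ p \notin s.

(* total degree of a nonzero polynomial (msize f = 1 + degree) *)
Definition mdegree (f : {mpoly R[2]}) : nat := (msize f).-1.

Definition irreducible_mpoly (f : {mpoly R[2]}) : Prop :=
  (1 < msize f)%N /\
  forall g h : {mpoly R[2]}, f = g * h -> (msize g <= 1)%N \/ (msize h <= 1)%N.

Definition min_def_poly (C : pt -> Prop) (f : {mpoly R[2]}) : Prop :=
  f != 0 /\ set_eq C (Zset f) /\
  forall g : {mpoly R[2]}, g != 0 -> set_eq (Zset g) C -> (mdegree f <= mdegree g)%N.

Definition irred_curve_le (d : nat) (f : {mpoly R[2]}) : Prop :=
  min_def_poly (Zset f) f /\
  infinite_set (Zset f) /\
  (exists g : {mpoly R[2]}, irreducible_mpoly g /\ set_eq (Zset g) (Zset f)) /\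
  (mdegree f <= d)%N.

Definition line_eq (a b c : R) : pt -> Prop := fun p => a * p.1 + b * p.2 = c.

Definition is_line (C : pt -> Prop) : Prop :=
  exists a b c : R, (a != 0 \/ b != 0) /\ set_eq C (line_eq a b c).

Definition is_vertical_line (C : pt -> Prop) : Prop :=
  exists c : R, set_eq C (fun p => p.1 = c).

Definition circle (c : pt) (r : R) : pt -> Prop :=
  fun p => (p.1 - c.1) ^+ 2 + (p.2 - c.2) ^+ 2 = r ^+ 2.

Definition reflect_in_line (a b c : R) (p : pt) : pt :=
  let t := (a * p.1 + b * p.2 - c) / (a ^+ 2 + b ^+ 2) in
  (p.1 - 2 * a * t, p.2 - 2 * b * t).

Definition at_most_one (n : nat) (A : pt -> Prop) (q : 'I_n -> pt) : Prop :=
  forall j j' : 'I_n, A (q j) -> A (q j') -> q j = q j'.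

(* conditions (1),(3),(4),(5),(6) for the curve C (the one containing S)
   with respect to the other point set T = {q_j} *)
Definition curve_conditions (C : pt -> Prop) (n : nat) (q : 'I_n -> pt) : Prop :=
  ~ is_vertical_line C /\
  (forall (c : pt) (r : R), 0 < r -> set_eq C (circle c r) ->
     forall j : 'I_n, q j <> c) /\
  (forall (c : pt) (r : R), 0 < r -> set_eq C (circle c r) ->
     forall r' : R, 0 < r' -> at_most_one (circle c r') q) /\
  (* (5) : every line parallel to C, united with its reflection in C *)
  (forall a b c : R, (a != 0 \/ b != 0) -> set_eq C (line_eq a b c) ->
     forall c' : R,
       at_most_one (fun x => line_eq a b c' x \/
                     exists y, line_eq a b c' y /\ x = reflect_in_line a b c y) q) /\
  (* (6) : every line orthogonal to C *)
  (forall a b c : R, (a != 0 \/ b != 0) -> set_eq C (line_eq a b c) ->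
     forall c' : R, at_most_one (line_eq (- b) a c') q).

Definition setting (d : nat) (f1 f2 : {mpoly R[2]})
    (m n : nat) (p : 'I_m -> pt) (q : 'I_n -> pt) : Prop :=
  (1 <= d)%N /\
  irred_curve_le d f1 /\ irred_curve_le d f2 /\
  (forall i, Zset f1 (p i)) /\ injective p /\
  (forall j, Zset f2 (q j)) /\ injective q /\
  (forall i j, p i <> q j) /\
  curve_conditions (Zset f1) q /\ curve_conditions (Zset f2) p.

Definition Cset (f2 : {mpoly R[2]}) (pi pj : pt) : pt * pt -> Prop :=
  fun z => Zset f2 z.1 /\ Zset f2 z.2 /\
    (z.1.1 - pi.1) ^+ 2 + (z.1.2 - pi.2) ^+ 2 =
    (z.2.1 - pj.1) ^+ 2 + (z.2.2 - pj.2) ^+ 2.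

Definition dist (u v : pt) : R := Num.sqrt ((u.1 - v.1) ^+ 2 + (u.2 - v.2) ^+ 2).

(* |A| <= k for a subset A of R^4 (possibly infinite a priori) *)
Definition card_le (A : pt * pt -> Prop) (k : nat) : Prop :=
  forall s : seq (pt * pt), uniq s -> (forall z, z \in s -> A z) -> (size s <= k)%N.

End Defs.

(* Main.v *)
Require Import Defs.
From mathcomp Require Import all_boot all_algebra.
From mathcomp Require Import reals.
From mathcomp Require Import mpoly.
From mathcomp Require Import ring lra.
Set Implicit Arguments.
Unset Strict Implicit.
Import GRing.Theory Num.Theory.
Local Open Scope ring_scope.

Lemma three_roots (R : fieldType) (al be ga t1 t2 t3 : R) :
  t1 != t2 -> t1 != t3 -> t2 != t3 ->
  al*t1^+2 + be*t1 + ga = 0 -> al*t2^+2 + be*t2 + ga = 0 ->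
  al*t3^+2 + be*t3 + ga = 0 -> al = 0 /\ be = 0 /\ ga = 0.
Proof.
move=> n12 n13 n23 h1 h2 h3.
have e12 : al*(t1+t2) + be = 0.
  have : (t1-t2)*(al*(t1+t2)+be) = (al*t1^+2+be*t1+ga) - (al*t2^+2+be*t2+ga) by ring.
  rewrite h1 h2 subrr => /eqP; rewrite mulf_eq0 subr_eq0 (negbTE n12) /= => /eqP //.
have e13 : al*(t1+t3) + be = 0.
  have : (t1-t3)*(al*(t1+t3)+be) = (al*t1^+2+be*t1+ga) - (al*t3^+2+be*t3+ga) by ring.
  rewrite h1 h3 subrr => /eqP; rewrite mulf_eq0 subr_eq0 (negbTE n13) /= => /eqP //.
have a0 : al = 0.
  have : (t2-t3)*al = (al*(t1+t2) + be) - (al*(t1+t3) + be) by ring.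
  rewrite e12 e13 subrr => /eqP; rewrite mulf_eq0 subr_eq0 (negbTE n23) /= => /eqP //.
have b0 : be = 0 by move: e12; rewrite a0 mul0r add0r.
split=> //; split=> //; by move: h1; rewrite a0 b0 !mul0r !add0r.
Qed.

Lemma L1 (R : numFieldType) (m e u v G t1 t2 t3 : R) :
  t1 != t2 -> t1 != t3 -> t2 != t3 ->
  (m * t1+e-u)^+2 - (t1-v)^+2 + G = 0 ->
  (m * t2+e-u)^+2 - (t2-v)^+2 + G = 0 ->
  (m * t3+e-u)^+2 - (t3-v)^+2 + G = 0 -> G = 0.
Proof.
move=> n12 n13 n23 h1 h2 h3.
have q t : (m * t+e-u)^+2 - (t-v)^+2 + G =
   (m^+2 - 1)*t^+2 + (2* m * (e-u) + 2*v)*t + ((e-u)^+2 - v^+2 + G) by ring.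
rewrite q in h1; rewrite q in h2; rewrite q in h3.
have [al [be ga]] := three_roots n12 n13 n23 h1 h2 h3.
have hv : v = - m * (e-u).
  have : 2*(v + m * (e-u)) = 0 by rewrite -be; ring.
  move/eqP; rewrite mulf_eq0 pnatr_eq0 /= addr_eq0 => /eqP ->; ring.
have hm : m^+2 = 1 by apply/eqP; rewrite -subr_eq0; apply/eqP.
have : G = (e - u) ^+ 2 - v ^+ 2 + G - (e-u)^+2 * (1 - m^+2) by rewrite hv; ring.
by rewrite ga hm subrr mulr0 subr0.
Qed.

Lemma solve_lin (R : numFieldType) (A B c1 s t : R) : A != 0 ->
  -2*A*s + 2*B*t + c1 = 0 -> s = B/A * t + c1/(2*A).
Proof.
move=> hA h.
have E : s = ((-2*A*s + 2*B*t + c1) - 2*B*t - c1)/(-2*A) by field.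
by rewrite {1}E h; field.
Qed.

Lemma L2 (R : numFieldType) (A B c1 u v G s1 t1 s2 t2 s3 t3 : R) :
  (A != 0) \/ (B != 0) ->
  ~ (s1 = s2 /\ t1 = t2) -> ~ (s1 = s3 /\ t1 = t3) -> ~ (s2 = s3 /\ t2 = t3) ->
  -2*A*s1 + 2*B*t1 + c1 = 0 -> -2*A*s2 + 2*B*t2 + c1 = 0 ->
  -2*A*s3 + 2*B*t3 + c1 = 0 ->
  (s1-u)^+2 - (t1-v)^+2 + G = 0 -> (s2-u)^+2 - (t2-v)^+2 + G = 0 ->
  (s3-u)^+2 - (t3-v)^+2 + G = 0 -> G = 0.
Proof.
move=> [hA|hB] n12 n13 n23 l1 l2 l3 q1 q2 q3.
- have e1 := solve_lin hA l1; have e2 := solve_lin hA l2; have e3 := solve_lin hA l3.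
  have d x y sx sy : ~ (sx = sy /\ x = y) -> sx = B/A*x + c1/(2*A) ->
     sy = B/A*y + c1/(2*A) -> x != y.
    move=> n ex ey; apply/eqP => exy; apply: n; split=> //; by rewrite ex ey exy.
  apply: (@L1 _ (B/A) (c1/(2*A)) u v G _ _ _ (d _ _ _ _ n12 e1 e2) (d _ _ _ _ n13 e1 e3) (d _ _ _ _ n23 e2 e3)).
  + by rewrite -e1.
  + by rewrite -e2.
  + by rewrite -e3.
- have sl s t : -2*A*s + 2*B*t + c1 = 0 -> -2*B*t + 2*A*s + (-c1) = 0.
    move=> h; have -> : -2*B*t + 2*A*s + (-c1) = - (-2*A*s + 2*B*t + c1) by ring.
    by rewrite h oppr0.
  have e1 := solve_lin hB (sl _ _ l1); have e2 := solve_lin hB (sl _ _ l2).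
  have e3 := solve_lin hB (sl _ _ l3).
  have d x y sx sy : ~ (x = y /\ sx = sy) -> sx = A/B*x + -c1/(2*B) ->
     sy = A/B*y + -c1/(2*B) -> x != y.
    move=> n ex ey; apply/eqP => exy; apply: n; split=> //; by rewrite ex ey exy.
  have qq s t : (s-u)^+2 - (t-v)^+2 + G = 0 -> (t - v)^+2 - (s-u)^+2 + - G = 0.
    move=> h; have -> : (t - v)^+2 - (s-u)^+2 + - G = - ((s-u)^+2 - (t-v)^+2 + G) by ring.
    by rewrite h oppr0.
  apply/eqP; rewrite -oppr_eq0; apply/eqP.
  apply: (@L1 _ (A/B) (-c1/(2*B)) v u (-G) _ _ _ (d _ _ _ _ n12 e1 e2) (d _ _ _ _ n13 e1 e3) (d _ _ _ _ n23 e2 e3)).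
  + by rewrite -e1 qq.
  + by rewrite -e2 qq.
  + by rewrite -e3 qq.
Qed.

Section Geo.
Variable R : realType.
Variables a b c : R.
Definition wf (x : pt R) := - b * x.1 + a * x.2.
Definition gf (x : pt R) := a * x.1 + b * x.2 - c.

Lemma keyid (P x : pt R) : gf P = 0 ->
  (a^+2 + b^+2) * ((P.1 - x.1)^+2 + (P.2 - x.2)^+2) = (wf P - wf x)^+2 + (gf x)^+2.
Proof.
move=> h.
have -> : (gf x)^+2 = (gf P - gf x)^+2 by rewrite h sub0r sqrrN.
rewrite /wf /gf; ring.
Qed.

Lemma winj (P Q : pt R) : a^+2 + b^+2 != 0 -> gf P = 0 -> gf Q = 0 -> wf P = wf Q -> P = Q.
Proof.
move=> hN hP hQ hw.
have e1 : (a^+2+b^+2)*(P.1-Q.1) = a*(gf P - gf Q) - b*(wf P - wf Q) by rewrite /wf /gf; ring.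
have e2 : (a^+2+b^+2)*(P.2-Q.2) = b*(gf P - gf Q) + a*(wf P - wf Q) by rewrite /wf /gf; ring.
rewrite hP hQ hw !subrr !mulr0 subrr in e1.
rewrite hP hQ hw !subrr !mulr0 addr0 in e2.
move/eqP: e1; rewrite mulf_eq0 (negbTE hN) subr_eq0 /= => /eqP e1.
move/eqP: e2; rewrite mulf_eq0 (negbTE hN) subr_eq0 /= => /eqP e2.
by case: P Q e1 e2 {hP hQ hw} => [? ?] [? ?] /= -> ->.
Qed.

Lemma refl_inv (x : pt R) : a^+2 + b^+2 != 0 ->
  reflect_in_line a b c (reflect_in_line a b c x) = x.
Proof.
move=> hN; case: x => x1 x2; rewrite /reflect_in_line /=.
congr (_, _); field => //.
Qed.

Lemma refl_line (x : pt R) : a^+2 + b^+2 != 0 ->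
  a * (reflect_in_line a b c x).1 + b * (reflect_in_line a b c x).2 = c - gf x.
Proof.
move=> hN; case: x => x1 x2; rewrite /reflect_in_line /gf /=.
field => //.
Qed.
End Geo.

Theorem lemma4p4 (R : realType) (d : nat) (f1 f2 : {mpoly R[2]})
    (m n : nat) (p : 'I_m -> pt R) (q : 'I_n -> pt R)
    (i j k l : 'I_m) :
  setting d f1 f2 p q ->
  dist (p i) (p k) != dist (p j) (p l) ->
  is_line (Zset f2) ->
  card_le (fun z => Cset f2 (p i) (p j) z /\ Cset f2 (p k) (p l) z) 4.
Proof.
move=> [_ [_ [_ [_ [_ [_ [_ [_ [_ cc2]]]]]]]]] hdist [a [b [c [hab hline]]]].
case: cc2 => [_ [_ [_ [h5 h6]]]].
have hN : a^+2 + b^+2 != 0.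
  rewrite paddr_eq0 ?sqr_ge0 // !sqrf_eq0; case: hab => h; by rewrite (negbTE h) ?andbF.
have F6 x y : wf a b (p x) = wf a b (p y) -> p x = p y.
  move=> e; apply: (h6 a b c hab hline (wf a b (p x)) x y) => //; by rewrite /line_eq.
have F5 x y : (gf a b c (p x))^+2 = (gf a b c (p y))^+2 -> p x = p y.
  move=> /eqP; rewrite eqf_sqr => /orP [] /eqP e.
  - apply: (h5 a b c hab hline (a * (p x).1 + b * (p x).2) x y); first by left.
    left; rewrite /line_eq; move: e; rewrite /gf => /(congr1 (fun r => r + c)).
    by rewrite !subrK.
  - apply: (h5 a b c hab hline (a * (p x).1 + b * (p x).2) x y); first by left.
    right; exists (reflect_in_line a b c (p y)); split; last by rewrite refl_inv.
    rewrite /line_eq refl_line // -[gf a b c (p y)]opprK -e /gf; ring.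
have onl P : Zset f2 P -> gf a b c P = 0.
  by move=> /hline; rewrite /line_eq /gf => ->; rewrite subrr.
have distxx (x : pt R) : dist x x = 0 by rewrite /dist !subrr expr0n /= addr0 sqrtr0.
move=> s us hs; rewrite leqNgt; apply/negP => hsz.
pose z0 : pt R * pt R := ((0,0),(0,0)).
have hz (r : nat) : (r < size s)%N -> Cset f2 (p i) (p j) (nth z0 s r) /\ Cset f2 (p k) (p l) (nth z0 s r).
  by move=> hr; apply: hs; rewrite mem_nth.
set wi := wf a b (p i); set wj := wf a b (p j); set wk := wf a b (p k); set wl := wf a b (p l).
set gi := gf a b c (p i); set gj := gf a b c (p j); set gk := gf a b c (p k); set gl := gf a b c (p l).
set A := wi - wk; set B := wj - wl.
set c1 := (wi^+2 - wk^+2) - (wj^+2 - wl^+2) + (gi^+2 - gk^+2 - gj^+2 + gl^+2).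
have E (z : pt R * pt R) : Cset f2 (p i) (p j) z -> Cset f2 (p k) (p l) z ->
   [/\ gf a b c z.1 = 0, gf a b c z.2 = 0,
       (wf a b z.1 - wi)^+2 - (wf a b z.2 - wj)^+2 + (gi^+2 - gj^+2) = 0,
       (wf a b z.1 - wk)^+2 - (wf a b z.2 - wl)^+2 + (gk^+2 - gl^+2) = 0 &
       -2*A*(wf a b z.1) + 2*B*(wf a b z.2) + c1 = 0].
  move=> [z1 [z2 e1]] [_ [_ e2]].
  have g1 := onl _ z1; have g2 := onl _ z2.
  have q1 : (wf a b z.1 - wi)^+2 - (wf a b z.2 - wj)^+2 + (gi^+2 - gj^+2) = 0.
    have : (wf a b z.1 - wi)^+2 + gi^+2 = (wf a b z.2 - wj)^+2 + gj^+2.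
      by rewrite -!keyid // e1.
    move=> h; have -> : (wf a b z.1 - wi)^+2 - (wf a b z.2 - wj)^+2 + (gi^+2 - gj^+2) = ((wf a b z.1 - wi)^+2 + gi^+2) - ((wf a b z.2 - wj)^+2 + gj^+2) by ring.
    by rewrite h subrr.
  have q2 : (wf a b z.1 - wk)^+2 - (wf a b z.2 - wl)^+2 + (gk^+2 - gl^+2) = 0.
    have : (wf a b z.1 - wk)^+2 + gk^+2 = (wf a b z.2 - wl)^+2 + gl^+2.
      by rewrite -!keyid // e2.
    move=> h; have -> : (wf a b z.1 - wk)^+2 - (wf a b z.2 - wl)^+2 + (gk^+2 - gl^+2) = ((wf a b z.1 - wk)^+2 + gk^+2) - ((wf a b z.2 - wl)^+2 + gl^+2) by ring.
    by rewrite h subrr.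
  split=> //.
  have -> : -2*A*(wf a b z.1) + 2*B*(wf a b z.2) + c1 =
    ((wf a b z.1 - wi)^+2 - (wf a b z.2 - wj)^+2 + (gi^+2 - gj^+2)) -
    ((wf a b z.1 - wk)^+2 - (wf a b z.2 - wl)^+2 + (gk^+2 - gl^+2)) by rewrite /A /B /c1; ring.
  by rewrite q1 q2 subrr.
have s0 : (0 < size s)%N by apply: leq_trans hsz.
have s1 : (1 < size s)%N by apply: leq_trans hsz.
have s2 : (2 < size s)%N by apply: leq_trans hsz.
have [a1 b1] := hz _ s0; have [a2 b2] := hz _ s1; have [a3 b3] := hz _ s2.
have [g11 g12 q11 q12 l1] := E _ a1 b1.
have [g21 g22 q21 q22 l2] := E _ a2 b2.
have [g31 g32 q31 q32 l3] := E _ a3 b3.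
have nd (r r' : nat) : (r < size s)%N -> (r' < size s)%N -> r != r' ->
  gf a b c (nth z0 s r).1 = 0 -> gf a b c (nth z0 s r).2 = 0 ->
  gf a b c (nth z0 s r').1 = 0 -> gf a b c (nth z0 s r').2 = 0 ->
  ~ (wf a b (nth z0 s r).1 = wf a b (nth z0 s r').1 /\
     wf a b (nth z0 s r).2 = wf a b (nth z0 s r').2).
  move=> hr hr' nrr ga1 ga2 gb1 gb2 [e1 e2].
  have := nth_uniq z0 hr hr' us; rewrite (negbTE nrr).
  have -> : nth z0 s r = nth z0 s r'.
    case E1: (nth z0 s r) ga1 ga2 e1 e2 => [u1 u2]; case E2: (nth z0 s r') => [v1 v2] /= ga1 ga2 e1 e2.
    rewrite E2 /= in gb1 gb2.
    by rewrite (winj hN ga1 gb1 e1) (winj hN ga2 gb2 e2).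
  by rewrite eqxx.
have [AB0|ABn] : (A = 0 /\ B = 0) \/ (A != 0 \/ B != 0).
  case: (eqVneq A 0) => [->|hA]; last by right; left.
  case: (eqVneq B 0) => [->|hB]; [by left | by right; right].
- case: AB0 => /eqP hA /eqP hB.
  rewrite subr_eq0 in hA; rewrite subr_eq0 in hB.
  move: hdist; rewrite (F6 _ _ (eqP hA)) (F6 _ _ (eqP hB)) !distxx eqxx //.
- have G1 := L2 ABn (nd _ _ s0 s1 isT g11 g12 g21 g22) (nd _ _ s0 s2 isT g11 g12 g31 g32)
     (nd _ _ s1 s2 isT g21 g22 g31 g32) l1 l2 l3 q11 q21 q31.
  have G2 := L2 ABn (nd _ _ s0 s1 isT g11 g12 g21 g22) (nd _ _ s0 s2 isT g11 g12 g31 g32)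
     (nd _ _ s1 s2 isT g21 g22 g31 g32) l1 l2 l3 q12 q22 q32.
  move/eqP: G1; rewrite subr_eq0 => /eqP /F5 eij.
  move/eqP: G2; rewrite subr_eq0 => /eqP /F5 ekl.
  by move: hdist; rewrite eij ekl eqxx.
Qed.
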